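(* Let $A,B$ be finite groups. (1) If $B$ is SMP, then $A\times B$ is MP if and only if $A$ is MP. (2) $A\times B$ is SMP if and only if both $A$ and $B$ are SMP.
   Context: A group $G$ has the Magnus Property (MP) if whenever $x,y\in G$ have the same normal closure in $G$, $x$ is conjugate in $G$ to $y$ or to $y^{-1}$; it has the Strong Magnus Property (SMP) if whenever $x,y\in G$ have the same normal closure, $x$ is conjugate to $y$. *)

(* Defs.v *)
From mathcomp Require Import all_boot all_fingroup.
From mathcomp Require Import gproduct.
Set Implicit Arguments. Unset Strict Implicit. Unset Printing Implicit Defensive.
Local Open Scope group_scope.

Definition normal_closure (gT : finGroupType) (x : gT) : {set gT} :=
  <<x ^: [set: gT]>>.

Definition conjugate (gT : finGroupType) (x y : gT) : Prop :=
  exists g : gT, x = y ^ g.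

Definition MP (gT : finGroupType) : Prop :=
  forall x y : gT, normal_closure x = normal_closure y ->
    conjugate x y \/ conjugate x y^-1.

Definition SMP (gT : finGroupType) : Prop :=
  forall x y : gT, normal_closure x = normal_closure y -> conjugate x y.

(* Main.v *)
Require Import Defs.
From mathcomp Require Import all_boot all_fingroup.
From mathcomp Require Import gproduct.
Set Implicit Arguments. Unset Strict Implicit. Unset Printing Implicit Defensive.


Section Aux.
Variables A B : finGroupType.
Local Open Scope group_scope.

Lemma nc_inv (G : finGroupType) (x : G) : normal_closure x^-1 = normal_closure x.
Proof. by rewrite /normal_closure classVg genV. Qed.

Lemma smp_selfinv (G : finGroupType) (x : G) : SMP G -> Defs.conjugate x (x^-1).
Proof. by move=> H; apply: H; rewrite nc_inv. Qed.

Lemma conj_trans (G : finGroupType) (x y z : G) :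
  Defs.conjugate x y -> Defs.conjugate y z -> Defs.conjugate x z.
Proof. by move=> [g ->] [h ->]; exists (h * g); rewrite conjgM. Qed.

Lemma conj_pair (a c : A) (b d : B) :
  Defs.conjugate ((a, b) : (A * B)%type) (c, d) <-> Defs.conjugate a c /\ Defs.conjugate b d.
Proof.
split.
  by move=> [[g h] [->] ->]; split; [exists g | exists h].
by move=> [[g ->] [h ->]]; exists (g, h).
Qed.

Lemma nc_fst (x : (A * B)%type) :
  [morphism of fun x : (A * B)%type => x.1] @* normal_closure x = normal_closure x.1.
Proof.
rewrite /normal_closure morphim_gen ?subsetT // morphim_class ?inE ?subsetT //.
congr (<< _ ^: _ >>); apply/setP => y; rewrite inE.
by rewrite (mem_morphim [morphism of fun x : (A * B)%type => x.1] (x := (y, 1))) ?inE.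
Qed.

Lemma nc_snd (x : (A * B)%type) :
  [morphism of fun x : (A * B)%type => x.2] @* normal_closure x = normal_closure x.2.
Proof.
rewrite /normal_closure morphim_gen ?subsetT // morphim_class ?inE ?subsetT //.
congr (<< _ ^: _ >>); apply/setP => y; rewrite inE.
by rewrite (mem_morphim [morphism of fun x : (A * B)%type => x.2] (x := (1, y))) ?inE.
Qed.

Lemma nc_pairg1 (x : A) :
  (@pairg1 A B) @* normal_closure x = normal_closure ((x, 1) : (A * B)%type).
Proof.
rewrite /normal_closure morphim_gen ?subsetT // morphim_class ?inE ?subsetT //.
congr (<< _ >>); rewrite morphim_pairg1; apply/setP => [[u v]].
apply/imsetP/imsetP => [[[g h] _ E] | [[g h] _ E]].
  by exists (g, h); rewrite ?inE.
exists (g, 1); rewrite ?inE ?andbT //= E.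
change ((g^-1 * (x * g), h^-1 * (1 * h)) = (g^-1 * (x * g), 1^-1 * (1 * 1))). by rewrite !mul1g mulVg invg1 mulg1.
Qed.

Lemma nc_pair1g (x : B) :
  (@pair1g A B) @* normal_closure x = normal_closure ((1, x) : (A * B)%type).
Proof.
rewrite /normal_closure morphim_gen ?subsetT // morphim_class ?inE ?subsetT //.
congr (<< _ >>); rewrite morphim_pair1g; apply/setP => [[u v]].
apply/imsetP/imsetP => [[[g h] _ E] | [[g h] _ E]].
  by exists (g, h); rewrite ?inE.
exists (1, h); rewrite ?inE ?eqxx //= E.
change ((g^-1 * (1 * g), h^-1 * (x * h)) = (1^-1 * (1 * 1), h^-1 * (x * h))). by rewrite !mul1g mulVg invg1 mulg1.
Qed.

End Aux.

Theorem proposition4p2 (A B : finGroupType) :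
  (SMP B -> (MP (A * B)%type <-> MP A)) /\
  (SMP (A * B)%type <-> SMP A /\ SMP B).
Proof.
split.
  move=> sB; split.
    move=> H x y E.
    have E' : normal_closure ((x, 1%g) : (A * B)%type) = normal_closure (y, 1%g).
      by rewrite -!nc_pairg1 E.
    case: (H _ _ E') => /(@conj_pair A B) [c _]; [by left | right].
    by move: c.
  move=> H [a b] [c d] E.
  have Ea := congr1 (fun S => ([morphism of fun x : (A * B)%type => x.1] @* S)%g) E.
  have Eb := congr1 (fun S => ([morphism of fun x : (A * B)%type => x.2] @* S)%g) E.
  rewrite /= !nc_fst in Ea; rewrite /= !nc_snd in Eb.
  have cb := sB _ _ Eb.
  case: (H _ _ Ea) => ca; [left | right]; apply/conj_pair; split => //.
  exact: conj_trans cb (smp_selfinv _ sB).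
split.
  move=> H; split.
    move=> x y E.
    have E' : normal_closure ((x, 1%g) : (A * B)%type) = normal_closure (y, 1%g).
      by rewrite -!nc_pairg1 E.
    by case/(@conj_pair A B): (H _ _ E').
  move=> x y E.
  have E' : normal_closure ((1%g, x) : (A * B)%type) = normal_closure (1%g, y).
    by rewrite -!nc_pair1g E.
  by case/(@conj_pair A B): (H _ _ E').
move=> [sA sB] [a b] [c d] E.
have Ea := congr1 (fun S => ([morphism of fun x : (A * B)%type => x.1] @* S)%g) E.
have Eb := congr1 (fun S => ([morphism of fun x : (A * B)%type => x.2] @* S)%g) E.
rewrite /= !nc_fst in Ea; rewrite /= !nc_snd in Eb.
by apply/conj_pair; split; [apply: sA | apply: sB].
Qed.
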